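(* Let $\mathbb{F}\in\{\mathbb{R},\mathbb{C}\}$, $M>N\ge1$, $M\ge 2$, and let $\mathcal{P}(M,N)$ be the set of Parseval frames for $\mathbb{F}^N$ with $M$ vectors. For $\Phi=\{\varphi_i\}_{i=1}^M\in\mathcal{P}(M,N)$ define $$EAD(\Phi)=\sum_{i=1}^M\Big(\|\varphi_i\|^2-\frac{N}{M}\Big)^2+\sum_{i\neq j}\big(|\langle\varphi_i,\varphi_j\rangle|-c_{M,N}\big)^2,\qquad c_{M,N}=\sqrt{\frac{N(M-N)}{M^2(M-1)}},$$ $$V(\Phi)=\sum_{i=1}^M\Big(\|\varphi_i\|^2-\frac{N}{M}\Big)^2+\sum_{i\neq j}\big(|\langle\varphi_i,\varphi_j\rangle|-c_\Phi\big)^2,\qquad c_\Phi=\frac{TC(\Phi)}{M(M-1)}.$$ Then the following three optimization problems have the same set of solutions: maximizing $TC(\Phi)$ over $\mathcal{P}(M,N)$; minimizing $EAD(\Phi)$ over $\mathcal{P}(M,N)$; minimizing $V(\Phi)$ over $\mathcal{P}(M,N)$.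
   Context: A Parseval frame for $\mathbb{F}^N$ is a family $\{\varphi_i\}_{i=1}^M\subseteq\mathbb{F}^N$ whose $N\times M$ matrix $\Phi$ (columns $\varphi_i$) satisfies $\Phi\Phi^*=I$. The total coherence is $TC(\Phi)=\sum_{i\neq j}|\langle\varphi_i,\varphi_j\rangle|$. *)

(* Defs.v *)
From HB Require Import structures.
From mathcomp Require Import all_boot all_order all_algebra.
From mathcomp Require Import reals.
From mathcomp.real_closed Require Import complex.

Set Implicit Arguments.
Unset Strict Implicit.
Unset Printing Implicit Defensive.

Import Order.TTheory GRing.Theory Num.Theory.
Local Open Scope ring_scope.

(* Generic setting: scalar field F (a numFieldType) together with its
   conjugation [cj] (identity for F = R, complex conjugation for F = C).
   A family {phi_i}_{i=1..M} in F^N is stored as the N x M matrix Phi whose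
   i-th column is phi_i.  All the quantities below take values in F; they
   are real (self-adjoint) values, and are compared with the order of F. *)
Section Frames.
Variables (F : numFieldType) (cj : F -> F).

Definition inner N M (Phi : 'M[F]_(N, M)) (i j : 'I_M) : F :=
  \sum_(k < N) Phi k i * cj (Phi k j).

Definition adjmx N M (Phi : 'M[F]_(N, M)) : 'M[F]_(M, N) :=
  \matrix_(i < M, k < N) cj (Phi k i).

Definition parseval N M (Phi : 'M[F]_(N, M)) : Prop :=
  Phi *m adjmx Phi = 1%:M.

Definition TC N M (Phi : 'M[F]_(N, M)) : F :=
  \sum_(i < M) \sum_(j < M | j != i) `|inner Phi i j|.

Definition sqnorm N M (Phi : 'M[F]_(N, M)) (i : 'I_M) : F := inner Phi i i.

Definition dev N M (c : F) (Phi : 'M[F]_(N, M)) : F :=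
  \sum_(i < M) (sqnorm Phi i - N%:R / M%:R) ^+ 2
  + \sum_(i < M) \sum_(j < M | j != i) (`|inner Phi i j| - c) ^+ 2.

Definition cPhi N M (Phi : 'M[F]_(N, M)) : F :=
  TC Phi / (M%:R * (M%:R - 1)).

Definition EAD N M (cMN : F) (Phi : 'M[F]_(N, M)) : F := dev cMN Phi.

Definition Vf N M (Phi : 'M[F]_(N, M)) : F := dev (cPhi Phi) Phi.

Definition is_max_on N M (f : 'M[F]_(N, M) -> F) (Phi : 'M[F]_(N, M)) : Prop :=
  parseval Phi /\ forall Psi : 'M[F]_(N, M), parseval Psi -> f Psi <= f Phi.

Definition is_min_on N M (f : 'M[F]_(N, M) -> F) (Phi : 'M[F]_(N, M)) : Prop :=
  parseval Phi /\ forall Psi : 'M[F]_(N, M), parseval Psi -> f Phi <= f Psi.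

Definition same_solutions N M (cMN : F) : Prop :=
  forall Phi : 'M[F]_(N, M),
    (is_max_on (@TC N M) Phi <-> is_min_on (EAD cMN) Phi) /\
    (is_min_on (EAD cMN) Phi <-> is_min_on (@Vf N M) Phi).

End Frames.

Definition cMN (R : realType) (N M : nat) : R :=
  Num.sqrt (N%:R * (M%:R - N%:R) / (M%:R ^+ 2 * (M%:R - 1))).

(* Main.v *)
Require Import Defs.
From HB Require Import structures.
From mathcomp Require Import all_boot all_order all_algebra.
From mathcomp Require Import reals.
From mathcomp.real_closed Require Import complex.
From mathcomp Require Import ring.
Import Order.TTheory GRing.Theory Num.Theory.
Local Open Scope ring_scope.

Section Gen.
Variables (F : numFieldType) (cj : F -> F).
Hypothesis cj0 : cj 0 = 0.
Hypothesis cjD : forall x y, cj (x + y) = cj x + cj y.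
Hypothesis cjM : forall x y, cj (x * y) = cj x * cj y.
Hypothesis cjK : forall x, cj (cj x) = x.
Hypothesis normK : forall x : F, `|x| ^+ 2 = x * cj x.

Lemma cj_sum (I : finType) (P : pred I) (f : I -> F) :
  cj (\sum_(i | P i) f i) = \sum_(i | P i) cj (f i).
Proof. exact: (big_morph cj cjD cj0). Qed.

Variables (N M : nat) (Phi : 'M[F]_(N, M)).
Hypothesis HP : parseval cj Phi.

Let G := adjmx cj Phi *m Phi.

Lemma innerG i j : inner cj Phi i j = G j i.
Proof.
rewrite /G mxE /inner; apply: eq_bigr => k _; rewrite mxE mulrC //.
Qed.

Lemma cj_inner i j : cj (inner cj Phi i j) = G i j.
Proof.
rewrite /G mxE /inner cj_sum; apply: eq_bigr => k _; rewrite mxE cjM cjK mulrC //.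
Qed.

Lemma trG : \tr G = N%:R.
Proof. by rewrite /G mxtrace_mulC HP mxtrace1. Qed.

Lemma trGG : \tr (G *m G) = N%:R.
Proof.
by rewrite /G mulmxA -(mulmxA _ Phi) HP mulmx1 trG.
Qed.

Lemma sum_sqnorm : \sum_i sqnorm cj Phi i = N%:R.
Proof.
rewrite -trG /mxtrace; apply: eq_bigr => i _; by rewrite /sqnorm innerG.
Qed.

Lemma sqnorm_ge0 i : 0 <= sqnorm cj Phi i.
Proof.
rewrite /sqnorm /inner; apply: sumr_ge0 => k _; rewrite -normK; exact: exprn_ge0.
Qed.

Lemma sum_sq :
  \sum_i (sqnorm cj Phi i ^+ 2 + \sum_(j | j != i) `|inner cj Phi i j| ^+ 2) = N%:R.
Proof.
rewrite -trGG /mxtrace; apply: eq_bigr => i _.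
rewrite mxE [in RHS](bigD1 i) //=; congr (_ + _).
  by rewrite /sqnorm innerG expr2.
by apply: eq_bigr => j _; rewrite normK cj_inner innerG mulrC.
Qed.

Lemma sum_excl (i : 'I_M) (x : F) : \sum_(j < M | j != i) x = (M%:R - 1) * x.
Proof.
have H : \sum_(j < M) x = x + \sum_(j < M | j != i) x by rewrite (bigD1 i).
have H2 : \sum_(j < M) x = M%:R * x by rewrite sumr_const card_ord mulr_natl.
rewrite H2 in H; by apply: (addrI x); rewrite -H mulrBl mul1r addrC subrK.
Qed.

Lemma dev_formula c (HM : M != 0%N) :
  dev cj c Phi = (N%:R - N%:R ^+ 2 / M%:R) - 2 * c * TC cj Phi
                 + c ^+ 2 * (M%:R * (M%:R - 1)).
Proof.
have HMF : (M%:R : F) != 0 by rewrite pnatr_eq0.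
rewrite /dev /TC.
set s := sqnorm cj Phi; set q := N%:R / M%:R.
have E1 : \sum_i (s i - q) ^+ 2 =
   \sum_i s i ^+ 2 - 2 * q * \sum_i s i + M%:R * q ^+ 2.
  transitivity (\sum_i (s i ^+ 2 - 2 * q * s i + q ^+ 2)).
    by apply: eq_bigr => i _; ring.
  by rewrite big_split sumrB /= -mulr_sumr sumr_const card_ord; congr (_ + _); rewrite mulr_natl.
have E2 : forall i : 'I_M, \sum_(j | j != i) (`|inner cj Phi i j| - c) ^+ 2 =
   \sum_(j | j != i) `|inner cj Phi i j| ^+ 2
   - 2 * c * \sum_(j | j != i) `|inner cj Phi i j| + (M%:R - 1) * c ^+ 2.
  move=> i.
  transitivity (\sum_(j | j != i) (`|inner cj Phi i j| ^+ 2
     - 2 * c * `|inner cj Phi i j| + c ^+ 2)).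
    by apply: eq_bigr => j _; ring.
  by rewrite big_split sumrB /= -mulr_sumr sum_excl.
rewrite E1 (eq_bigr _ (fun i _ => E2 i)) big_split sumrB /= -mulr_sumr.
rewrite sumr_const card_ord -mulr_natl.
have S2 := sum_sq; rewrite big_split /= in S2.
have S1 := sum_sqnorm; rewrite /s -/(sqnorm cj Phi) S1.
rewrite -/s.
have -> : \sum_i s i ^+ 2 = N%:R - \sum_i \sum_(j | j != i) `|inner cj Phi i j| ^+ 2.
  by rewrite -S2 addrK.
rewrite /q; by field.
Qed.

End Gen.

Lemma gen_same (F : numFieldType) (cj : F -> F)
  (cj0 : cj 0 = 0) (cjD : forall x y, cj (x + y) = cj x + cj y)
  (cjM : forall x y, cj (x * y) = cj x * cj y) (cjK : forall x, cj (cj x) = x)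
  (normK : forall x : F, `|x| ^+ 2 = x * cj x) (N M : nat) (c : F) :
  (2 <= M)%N -> 0 < c -> same_solutions cj N M c.
Proof.
move=> HM2 c0 Phi.
have HM : M != 0%N by case: (M) HM2.
set K := (N%:R - N%:R ^+ 2 / M%:R : F).
set D := (M%:R * (M%:R - 1) : F).
have D0 : 0 < D.
  apply: mulr_gt0; first by rewrite ltr0n lt0n.
  by rewrite subr_gt0 ltr1n.
have EADf : forall Psi : 'M[F]_(N, M), parseval cj Psi ->
    EAD cj c Psi = K - 2 * c * TC cj Psi + c ^+ 2 * D.
  by move=> Psi HP; rewrite /EAD (@dev_formula F cj cj0 cjD cjM cjK normK N M Psi HP _ HM).
have Vff : forall Psi : 'M[F]_(N, M), parseval cj Psi ->
    Vf cj Psi = K - TC cj Psi ^+ 2 / D.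
  move=> Psi HP; rewrite /Vf (@dev_formula F cj cj0 cjD cjM cjK normK N M Psi HP _ HM) /cPhi -/D -/K.
  by field; rewrite gt_eqF.
have TC0 : forall Psi : 'M[F]_(N, M), 0 <= TC cj Psi.
  by move=> Psi; apply: sumr_ge0 => i _; apply: sumr_ge0 => j _.
have key1 : forall P Q : 'M[F]_(N, M), parseval cj P -> parseval cj Q ->
    (EAD cj c P <= EAD cj c Q) = (TC cj Q <= TC cj P).
  move=> P Q HP HQ; rewrite !EADf // lerD2r lerD2l lerN2 ler_pM2l //.
  by rewrite mulr_gt0.
have key2 : forall P Q : 'M[F]_(N, M), parseval cj P -> parseval cj Q ->
    (Vf cj P <= Vf cj Q) = (TC cj Q <= TC cj P).
  move=> P Q HP HQ; rewrite !Vff // lerD2l lerN2 ler_pM2r ?invr_gt0 //.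
  by rewrite ler_sqr ?nnegrE ?TC0.
have E1 : is_max_on cj (@TC F cj N M) Phi <-> is_min_on cj (EAD cj c) Phi.
  split=> -[HP H]; split=> // Psi HPsi.
    by rewrite key1 // H.
  by rewrite -key1 // H.
have E2 : is_max_on cj (@TC F cj N M) Phi <-> is_min_on cj (@Vf F cj N M) Phi.
  split=> -[HP H]; split=> // Psi HPsi.
    by rewrite key2 // H.
  by rewrite -key2 // H.
split=> //; split=> H.
  by apply/E2/E1.
by apply/E1/E2.
Qed.

Theorem proposition5 (R : realType) (M N : nat) :
  (N < M)%N -> (1 <= N)%N -> (2 <= M)%N ->
  same_solutions (F := R) id N M (cMN R N M) /\
  same_solutions (F := R[i]) Num.conj N M ((cMN R N M)%:C)%C.
Proof.
move=> HNM HN HM.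
have cpos : 0 < cMN R N M.
  rewrite /cMN sqrtr_gt0; apply: divr_gt0.
    apply: mulr_gt0; first by rewrite ltr0n.
    by rewrite subr_gt0 ltr_nat.
  apply: mulr_gt0; first by rewrite exprn_gt0 // ltr0n; case: (M) HM.
  by rewrite subr_gt0 ltr1n.
split.
  apply: gen_same => //.
  by move=> x; rewrite real_normK ?num_real.
apply: gen_same => //.
- exact: rmorph0.
- exact: rmorphD.
- exact: rmorphM.
- exact: conjCK.
- exact: normCK.
- have : (0 : R)%:C%C < (cMN R N M)%:C%C by rewrite ltcR.
  by [].
Qed.
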